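(* Let $G=(V,E)$ be a finite directed graph and let there be $k$ players; player $i\in\{1,\dots,k\}$ has a source–sink pair $(s_i,t_i)$ of vertices of $G$ and a flow amount $r_i>0$, and must route all of $r_i$ along a single $s_i$–$t_i$ path chosen from the set $\Pi_i$ of $s_i$–$t_i$ paths in $G$ (non-splittable, atomic routing). A feasible flow $f$ is a choice of one path $P_i\in\Pi_i$ for each player $i$; for an edge $e$, $f_e=\sum_{i: e\in P_i} r_i$ denotes the total flow on $e$. Each edge $e$ has a congestion function $c_e:\mathbb{R}^+\to\mathbb{R}^+$ which is affine, $c_e(x)=a_e x+b_e$, and a unit-price function $u_e:\mathbb{R}^+\to\mathbb{R}^+$. The cost to player $i$ of a path $P$ under flow $f$ is $t^i_P(f)=\sum_{e\in P}\bigl(c_e(f_e)+u_e(r_i)\bigr)$. Call $f$ an equilibrium flow if for every player $i$ and every pair $P,\tilde P\in\Pi_i$ with $P$ the path used by $i$ in $f$, one has $t^i_P(f)\le t^i_{\tilde P}(\tilde f)$, where $\tilde f$ is the flow identical to $f$ except that player $i$ routes its $r_i$ units along $\tilde P$ instead of $P$. Then at least one equilibrium flow exists.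
   Context: The per-unit price $u_e(r_i)$ is interpreted as $F_e(r_i)/r_i$, where $F_e(r_i)$ is the amount charged by the Internet service provider owning edge $e$ for routing $r_i$ units of player $i$'s flow; it depends only on player $i$'s own flow amount, while the congestion term $c_e$ depends on the total flow $f_e$ on the edge. *)

(* Defs.v *)
From HB Require Import structures.
From mathcomp Require Import all_boot all_order all_algebra.
From mathcomp Require Import reals.
Set Implicit Arguments. Unset Strict Implicit. Unset Printing Implicit Defensive.
Import Order.TTheory GRing.Theory Num.Theory.
Local Open Scope ring_scope.

Fixpoint is_walk (V E : eqType) (src dst : E -> V) (s t : V) (p : seq E) : bool :=
  match p with
  | [::] => s == t
  | e :: p' => (src e == s) && is_walk src dst (dst e) t p'
  end.

Definition is_stpath (V E : eqType) (src dst : E -> V) (s t : V) (p : seq E) : bool :=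
  is_walk src dst s t p && uniq (s :: map dst p).

Definition load (R : realType) (E : eqType) (k : nat) (r : 'I_k -> R)
  (P : 'I_k -> seq E) (e : E) : R :=
  \sum_(i < k | e \in P i) r i.

Definition deviate (E : Type) (k : nat) (P : 'I_k -> seq E) (i : 'I_k) (q : seq E)
  : 'I_k -> seq E :=
  fun j => if j == i then q else P j.

Definition pcost (R : realType) (E : eqType) (k : nat) (r : 'I_k -> R)
  (a b : E -> R) (u : E -> R -> R) (P : 'I_k -> seq E) (i : 'I_k) (q : seq E) : R :=
  \sum_(e <- q) ((a e * load r P e + b e) + u e (r i)).

Definition is_equilibrium (R : realType) (V E : eqType) (src dst : E -> V)
  (k : nat) (s t : 'I_k -> V) (r : 'I_k -> R) (a b : E -> R) (u : E -> R -> R)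
  (P : 'I_k -> seq E) : Prop :=
  forall (i : 'I_k) (q : seq E), is_stpath src dst (s i) (t i) q ->
    pcost r a b u P i (P i) <= pcost r a b u (deviate P i q) i q.

(* Main.v *)
Require Import Defs.
From HB Require Import structures.
From mathcomp Require Import all_boot all_order all_algebra.
From mathcomp Require Import reals.
From mathcomp Require Import ring.
Set Implicit Arguments. Unset Strict Implicit. Unset Printing Implicit Defensive.
Import Order.TTheory GRing.Theory Num.Theory.
Local Open Scope ring_scope.

Fixpoint allseq (E : finType) (n : nat) : seq (seq E) :=
  [::] :: (if n is n'.+1 then [seq x :: p | x <- enum E, p <- allseq E n'] else [::]).

Lemma mem_allseq (E : finType) (p : seq E) (n : nat) :
  (size p <= n)%N -> p \in allseq E n.
Proof.
elim: p n => [|x p IH] n; first by case: n => [|n]; rewrite /= inE eqxx.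
case: n => [|n] //= Hs; rewrite inE; apply/orP; right.
by apply: (allpairs_f (fun x p => x :: p)); [rewrite mem_enum | apply: IH].
Qed.

Lemma stpath_uniq (V E : eqType) (src dst : E -> V) s t p :
  is_stpath src dst s t p -> uniq p.
Proof.
by case/andP=> _ /= /andP[_ /map_uniq].
Qed.

Lemma stpath_size (V E : finType) (src dst : E -> V) s t p :
  is_stpath src dst s t p -> (size p <= #|E|)%N.
Proof.
move=> /stpath_uniq /card_uniqP <-; exact: max_card.
Qed.

Definition sq (R : realType) (E : eqType) (k : nat) (r : 'I_k -> R)
  (P : 'I_k -> seq E) (e : E) : R :=
  \sum_(i < k | e \in P i) r i ^+ 2.

Definition Cst (R : realType) (E : eqType) (k : nat) (r : 'I_k -> R)
  (b : E -> R) (u : E -> R -> R) (j : 'I_k) (p : seq E) : R :=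
  \sum_(e <- p) (b e + u e (r j)).

Definition Phi (R : realType) (E : finType) (k : nat) (r : 'I_k -> R)
  (a b : E -> R) (u : E -> R -> R) (P : 'I_k -> seq E) : R :=
  \sum_(e : E) a e * (load r P e ^+ 2 + sq r P e)
  + \sum_(j < k) 2 * r j * Cst r b u j (P j).

Lemma split_i (R : realType) (E : eqType) (k : nat) (g : 'I_k -> R)
  (Q : 'I_k -> seq E) (i : 'I_k) (e : E) :
  \sum_(j < k | e \in Q j) g j =
  (if e \in Q i then g i else 0) + \sum_(j < k | j != i) (if e \in Q j then g j else 0).
Proof. by rewrite big_mkcond (bigD1 i) //=. Qed.

Lemma rest_dev (R : realType) (E : eqType) (k : nat) (g : 'I_k -> R)
  (P : 'I_k -> seq E) (i : 'I_k) (q : seq E) (e : E) :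
  \sum_(j < k | j != i) (if e \in deviate P i q j then g j else 0) =
  \sum_(j < k | j != i) (if e \in P j then g j else 0).
Proof.
by apply: eq_bigr => j /negbTE ji; rewrite /deviate ji.
Qed.

Lemma Phi_ext (R : realType) (E : finType) (k : nat) (r : 'I_k -> R)
  (a b : E -> R) (u : E -> R -> R) (P Q : 'I_k -> seq E) :
  P =1 Q -> Phi r a b u P = Phi r a b u Q.
Proof.
move=> PQ; rewrite /Phi /load /sq.
congr (_ + _); apply: eq_bigr => j _.
  by congr (_ * (_ ^+ 2 + _)); apply: eq_bigl => i; rewrite PQ.
by rewrite PQ.
Qed.

Lemma seq_cond (R : realType) (E : finType) (q : seq E) (F : E -> R) :
  uniq q -> \sum_(e <- q) F e = \sum_(e : E) (if e \in q then F e else 0).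
Proof. by move=> uq; rewrite (big_uniq _ uq) /= big_mkcond. Qed.

Lemma Phi_dev (R : realType) (E : finType) (k : nat) (r : 'I_k -> R)
  (a b : E -> R) (u : E -> R -> R) (P : 'I_k -> seq E) (i : 'I_k) (q : seq E) :
  uniq (P i) -> uniq q ->
  Phi r a b u (deviate P i q) - Phi r a b u P =
  2 * r i * (pcost r a b u (deviate P i q) i q - pcost r a b u P i (P i)).
Proof.
move=> uP uq.
have Pi : deviate P i q i = q by rewrite /deviate eqxx.
have HA : \sum_(e : E) a e * (load r (deviate P i q) e ^+ 2 + sq r (deviate P i q) e)
   - \sum_(e : E) a e * (load r P e ^+ 2 + sq r P e) =
   2 * r i * (\sum_(e <- q) a e * load r (deviate P i q) e
              - \sum_(e <- P i) a e * load r P e).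
  rewrite (seq_cond _ uq) (seq_cond _ uP) -!sumrB mulr_sumr.
  apply: eq_bigr => e _.
  rewrite /load /sq !(split_i _ (deviate P i q) i) !(split_i _ P i) !rest_dev Pi.
  set L := \sum_(j < k | j != i) _.
  set S := \sum_(j < k | j != i) _.
  by case: (e \in q); case: (e \in P i); rewrite /=; ring.
have HB : \sum_(j < k) 2 * r j * Cst r b u j (deviate P i q j)
   - \sum_(j < k) 2 * r j * Cst r b u j (P j) =
   2 * r i * (Cst r b u i q - Cst r b u i (P i)).
  rewrite (bigD1 i) //= [X in _ - X](bigD1 i) //= Pi.
  rewrite (eq_bigr (fun j => 2 * r j * Cst r b u j (P j))); last first.
    by move=> j /negbTE ji; rewrite /deviate ji.
  ring.
rewrite /Cst !big_split /= in HB.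
rewrite /Phi /pcost !big_split /=.
move: HA HB; set A1 := \sum_(e : E) _; set A0 := \sum_(e : E) _.
set B1 := \sum_(j < k) _; set B0 := \sum_(j < k) _.
move=> HA HB.
have -> : A1 + B1 - (A0 + B0) = (A1 - A0) + (B1 - B0) by ring.
rewrite HA HB; ring.
Qed.

Theorem theorem1 (R : realType) (V E : finType) (src dst : E -> V)
  (k : nat) (s t : 'I_k -> V) (r : 'I_k -> R)
  (a b : E -> R) (u : E -> R -> R)
  (hr : forall i, 0 < r i)
  (ha : forall e, 0 <= a e) (hb : forall e, 0 <= b e)
  (hu : forall e x, 0 <= x -> 0 <= u e x)
  (hpath : forall i, exists p : seq E, is_stpath src dst (s i) (t i) p) :
  exists P : 'I_k -> seq E,
    (forall i, is_stpath src dst (s i) (t i) (P i)) /\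
    is_equilibrium src dst s t r a b u P.
Proof.
pose L := allseq E #|E|.
have H0 : forall j, xchoose (hpath j) \in L.
  by move=> j; apply: mem_allseq; apply: stpath_size (xchooseP (hpath j)).
pose valid (σ : {ffun 'I_k -> seq_sub L}) :=
  [forall j, is_stpath src dst (s j) (t j) (ssval (σ j))].
pose σ0 : {ffun 'I_k -> seq_sub L} := [ffun j => SeqSub (H0 j)].
have v0 : valid σ0 by apply/forallP => j; rewrite ffunE /=; exact: xchooseP.
pose F (σ : {ffun 'I_k -> seq_sub L}) := Phi r a b u (fun j => ssval (σ j)).
case: (Order.TotalTheory.arg_minP F v0) => σ /forallP Hv Hmin.
exists (fun j => ssval (σ j)); split => // i q hq.
have hqL : q \in L by apply: mem_allseq; apply: stpath_size hq.
pose σ' : {ffun 'I_k -> seq_sub L} :=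
  [ffun j => if j == i then SeqSub hqL else σ j].
have v' : valid σ'.
  apply/forallP => j; rewrite ffunE.
  by case: eqP => [->|_] //=; exact: Hv.
have := Hmin σ' v'.
rewrite /F (@Phi_ext _ _ _ _ _ _ _ (fun j => ssval (σ' j))
   (deviate (fun j => ssval (σ j)) i q)); last first.
  by move=> j; rewrite ffunE /deviate; case: (j == i).
rewrite -subr_ge0 Phi_dev; last 2 first.
- exact: stpath_uniq (Hv i).
- exact: stpath_uniq hq.
by rewrite pmulr_rge0 ?subr_ge0 // mulr_gt0.
Qed.
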